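(* Let $d,K,n$ be positive integers with $K\ge 2$. For $\tau>0$ let $$F_\tau(\mathbf W,\mathbf H)=\frac{1}{nK}\sum_{k=1}^{K}\sum_{i=1}^{n}\mathcal L_{\mathrm{CE}}(\mathbf W^\top \mathbf h_{k,i},\mathbf y_k,\tau),$$ and let $\mathcal S_\tau=\operatorname{argmin}\{F_\tau(\mathbf W,\mathbf H):\mathbf W\in\mathrm{OB}(d,K),\ \mathbf H\in \mathrm{OB}(d,nK)\}$. Then $$\limsup_{\tau\to 0}\mathcal S_\tau\ \subseteq\ \operatorname{argmin}_{\mathbf W\in\mathrm{OB}(d,K),\ \mathbf H\in\mathrm{OB}(d,nK)}\mathcal L_{\mathrm{HardMax}}(\mathbf W,\mathbf H).$$
   Context: $\mathrm{OB}(d,m)$ denotes the set of real $d\times m$ matrices all of whose columns have unit Euclidean norm. A matrix $\mathbf W\in\mathrm{OB}(d,K)$ has columns $\mathbf w_1,\dots,\mathbf w_K$; a matrix $\mathbf H\in\mathrm{OB}(d,nK)$ has columns indexed as $\mathbf h_{k,i}$, $k\in[K]$, $i\in[n]$. $\mathbf y_k\in\mathbb R^K$ is the $k$-th standard basis vector. For $\mathbf z\in\mathbb R^K$, $\mathcal L_{\mathrm{CE}}(\mathbf z,\mathbf y_k,\tau)=-\log\big(\exp(z_k/\tau)/\sum_{j=1}^K\exp(z_j/\tau)\big)$. The HardMax loss is $\mathcal L_{\mathrm{HardMax}}(\mathbf W,\mathbf H)=\max_{k\in[K]}\max_{i\in[n]}\max_{k'\ne k}\langle \mathbf w_{k'}-\mathbf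 w_k,\mathbf h_{k,i}\rangle$. The $\limsup$ of sets as $\tau\to0$ is the (Painlevé–Kuratowski) outer limit: the set of all limit points of sequences $x_j\in\mathcal S_{\tau_j}$ with $\tau_j\to 0$. *)

(* Defs.v *)
From HB Require Import structures.
From mathcomp Require Import all_boot all_order all_algebra.
From mathcomp Require Import all_classical all_reals all_analysis.
Unset Printing Implicit Defensive.
Import Order.TTheory GRing.Theory Num.Theory.
Import numFieldNormedType.Exports.
Local Open Scope classical_set_scope.
Local Open Scope ring_scope.

Section Defs.
Variable R : realType.

Definition OB (d m : nat) : set 'M[R]_(d, m) :=
  [set A | forall j : 'I_m, \sum_(l < d) (A l j) ^+ 2 = 1].

Definition hcol (d K n : nat) (H : 'M[R]_(d, K * n)) (k : 'I_K) (i : 'I_n)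
  : 'cV[R]_d := col (mxvec_index k i) H.

Definition CE (K : nat) (z : 'cV[R]_K) (k : 'I_K) (tau : R) : R :=
  - ln (expR (z k 0 / tau) / \sum_(j < K) expR (z j 0 / tau)).

Definition Ftau (d K n : nat) (tau : R) (W : 'M[R]_(d, K)) (H : 'M[R]_(d, K * n)) : R :=
  (n * K)%:R^-1 * \sum_(k < K) \sum_(i < n) CE K (W^T *m hcol d K n H k i) k tau.

Definition argmin_on (T : Type) (S : set T) (f : T -> R) : set T :=
  [set x | S x /\ forall y, S y -> f x <= f y].

Definition argmin_on_e (T : Type) (S : set T) (f : T -> \bar R) : set T :=
  [set x | S x /\ forall y, S y -> (f x <= f y)%E].

Definition OBpair (d K n : nat) : set ('M[R]_(d, K) * 'M[R]_(d, K * n)) :=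
  [set p | OB d K p.1 /\ OB d (K * n) p.2].

Definition S_tau (d K n : nat) (tau : R) : set ('M[R]_(d, K) * 'M[R]_(d, K * n)) :=
  @argmin_on ('M[R]_(d, K) * 'M[R]_(d, K * n)) (OBpair d K n)
    (fun p => Ftau d K n tau p.1 p.2).

(* HardMax loss: max over k, i, k' <> k of <w_k' - w_k, h_{k,i}>,
   computed in the extended reals (-oo is the neutral element of max;
   the index set is nonempty when K >= 2 and n >= 1). *)
Definition HardMax (d K n : nat) (W : 'M[R]_(d, K)) (H : 'M[R]_(d, K * n)) : \bar R :=
  \big[Order.max/-oo%E]_(k < K) \big[Order.max/-oo%E]_(i < n)
    \big[Order.max/-oo%E]_(k' < K | k' != k)
      (\sum_(l < d) (W l k' - W l k) * hcol d K n H k i l 0)%:E.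

(* Painleve-Kuratowski outer limit as tau -> 0+ of a family of sets S_tau
   (tau > 0): limits of sequences x_j in S_(tau_j) with tau_j -> 0. *)
Definition outer_limit_0 (T : topologicalType) (S : R -> set T) : set T :=
  [set x | exists (tau : nat -> R) (xs : nat -> T),
     (forall j, 0 < tau j) /\ tau @ \oo --> (0 : R) /\
     (forall j, S (tau j) (xs j)) /\ xs @ \oo --> x].

End Defs.

(* Main.v *)
Require Import Defs.
From HB Require Import structures.
From mathcomp Require Import all_boot all_order all_algebra.
From mathcomp Require Import all_classical all_reals all_analysis.
From mathcomp Require Import ring lra.
Import Order.TTheory GRing.Theory Num.Theory.
Import numFieldNormedType.Exports.
Local Open Scope classical_set_scope.
Local Open Scope ring_scope.

Section Helpers.
Variable R : realType.

Lemma ent1 (m1 n1 m2 n2 : nat) (xs : nat -> 'M[R]_(m1,n1) * 'M[R]_(m2,n2)) (x : 'M[R]_(m1,n1) * 'M[R]_(m2,n2)) :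
  xs @ \oo --> x -> forall a b, (fun t => (xs t).1 a b) @ \oo --> x.1 a b.
Proof.
move=> xc a b.
have h1 : (fun t => (xs t).1) @ \oo --> x.1.
  apply: (cvg_comp _ _ xc). exact: cvg_fst.
exact: (cvg_comp _ _ h1 (@coord_continuous R _ _ a b _)).
Qed.
Lemma ent2 (m1 n1 m2 n2 : nat) (xs : nat -> 'M[R]_(m1,n1) * 'M[R]_(m2,n2)) (x : 'M[R]_(m1,n1) * 'M[R]_(m2,n2)) :
  xs @ \oo --> x -> forall a b, (fun t => (xs t).2 a b) @ \oo --> x.2 a b.
Proof.
move=> xc a b.
have h1 : (fun t => (xs t).2) @ \oo --> x.2.
  apply: (cvg_comp _ _ xc). exact: cvg_snd.
exact: (cvg_comp _ _ h1 (@coord_continuous R _ _ a b _)).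
Qed.
Lemma cvg_sumR (I : finType) (f : I -> nat -> R) (a : I -> R) :
  (forall i, f i @ \oo --> a i) -> (fun t => \sum_i f i t) @ \oo --> \sum_i a i.
Proof.
move=> h. apply: (@cvg_big _ _ +%R 0 xpredT _ _ _ (index_enum I) f a) => //.
exact: add_continuous.
Qed.


Lemma ln1D_lb (v : R) : 0 <= v -> v / (1 + v) <= ln (1 + v).
Proof.
move=> v0.
have p : 0 < 1 + v by lra.
have e : (1 + v)^-1 = 1 + (- (v / (1 + v))).
  by field; apply/lt0r_neq0.
have h : ln (1 + - (v / (1 + v))) <= - (v / (1 + v)).
  apply: le_ln1Dx.
  rewrite ltrNl opprK ltr_pdivrMr // mul1r; lra.
rewrite -e in h.
rewrite lnV ?posrE // in h.
lra.
Qed.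

Lemma ln1D_ub (v : R) : 0 <= v -> ln (1 + v) <= v.
Proof. by move=> v0; apply: le_ln1Dx; lra. Qed.

Lemma ln1exp_lb (x : R) : x <= ln (1 + expR x).
Proof.
have e0 := expR_gt0 x.
rewrite -{1}(expRK x) ler_ln ?posrE //; lra.
Qed.

Lemma ev_ex {P Q : nat -> Prop} : (\forall t \near \oo, P t) -> (\forall t \near \oo, Q t) ->
  exists j, P j /\ Q j.
Proof.
move=> hP hQ. have := filter_ex (filterI hP hQ). by move=> [j [a b]]; exists j.
Qed.

Lemma final (N Kr c A : R) (tau m : nat -> R) : 0 < N -> 0 < Kr -> c <= 0 -> c < A ->
  (forall j, 0 < tau j) -> tau @ \oo --> 0 -> m @ \oo --> A ->
  (forall j, N^-1 * ln (1 + expR (m j / tau j)) <= ln (1 + Kr * expR (c / tau j))) -> False.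
Proof.
move=> N0 K0 c0 cA tau0 tc mc H.
set delta := (A - c) / 2.
have d0 : 0 < delta by rewrite /delta; lra.
set s := c + delta.
have sA : s < A by rewrite /s /delta; lra.
have em : \forall t \near \oo, s < m t by apply: (cvgr_gt A mc s sA).
have U j : ln (1 + Kr * expR (c / tau j)) <= Kr * expR (c / tau j).
  by apply: ln1D_ub; rewrite mulr_ge0 ?expR_ge0 // ltW.
have HL j : ln (1 + expR (m j / tau j)) <= N * (Kr * expR (c / tau j)).
  have -> : ln (1 + expR (m j / tau j)) = N * (N^-1 * ln (1 + expR (m j / tau j))).
    by rewrite mulrA mulfV ?mul1r // lt0r_neq0.
  rewrite ler_pM2l //; exact: le_trans (H j) (U j).
have [s0|s0] := ltrP 0 s.
  have ep : 0 < s / (N * Kr) by rewrite divr_gt0 // mulr_gt0.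
  have et : \forall t \near \oo, tau t < s / (N * Kr) by apply: (cvgr_lt 0 tc _ ep).
  have [j [mj tj]] := ev_ex em et.
  have t0 := tau0 j.
  have h1 := ln1exp_lb (m j / tau j).
  have h2 := HL j.
  have h3 : expR (c / tau j) <= 1 by rewrite expR_le1 mulr_le0_ge0 // invr_ge0 ltW.
  have h4 : s / tau j < m j / tau j by rewrite ltr_pM2r // invr_gt0.
  have h5 : N * (Kr * expR (c / tau j)) <= N * Kr by rewrite ler_pM2l // ler_piMr // ltW.
  have h6 : s / tau j < N * Kr by lra.
  rewrite ltr_pdivrMr // in h6.
  rewrite ltr_pdivlMr ?mulr_gt0 // in tj.
  lra.
have ep : 0 < delta / (2 * N * Kr) by rewrite divr_gt0 // !mulr_gt0.
have et : \forall t \near \oo, tau t < delta / (2 * N * Kr) by apply: (cvgr_lt 0 tc _ ep).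
  have [j [mj tj]] := ev_ex em et.
have t0 := tau0 j.
set v := expR (s / tau j).
have v0 : 0 <= v := expR_ge0 _.
have v1 : v <= 1 by rewrite expR_le1 mulr_le0_ge0 // invr_ge0 ltW.
have h1 : ln (1 + v) <= ln (1 + expR (m j / tau j)).
  rewrite ler_ln ?posrE; [|lra|]; last by have := expR_gt0 (m j / tau j); lra.
  rewrite lerD2l ler_expR ler_pM2r ?invr_gt0 //; exact: ltW.
have h2 := ln1D_lb v v0.
have h3 : v / 2 <= v / (1 + v).
  rewrite ler_pdivrMr; last lra.
  rewrite mulrAC ler_pdivlMr; last lra.
  nra.
have h4 := HL j.
have h5 : v <= 2 * N * Kr * expR (c / tau j) by lra.
have e : v = expR (delta / tau j) * expR (c / tau j).
  by rewrite /v -expRD /s; congr expR; field; apply: lt0r_neq0.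
rewrite e ler_pM2r ?expR_gt0 // in h5.
have h6 := expR_ge1Dx (delta / tau j).
rewrite ltr_pdivlMr ?mulr_gt0 // in tj.
have h7 : delta / tau j > 2 * N * Kr.
  by rewrite ltr_pdivlMr // mulrC.
lra.
Qed.

Local Open Scope ereal_scope.
Lemma bmax_ge (I : finType) (P : pred I) (F : I -> \bar R) i :
  P i -> F i <= \big[Order.max/-oo]_(j | P j) F j.
Proof. by move=> Pi; rewrite (bigD1 i) //= le_max lexx. Qed.

Lemma bmax_ltP (I : finType) (P : pred I) (F : I -> \bar R) x :
  x < \big[Order.max/-oo]_(j | P j) F j -> exists j, P j /\ x < F j.
Proof.
apply: (big_ind (fun v => x < v -> exists j, P j /\ x < F j)).
- by rewrite ltNge leNye.
- by move=> u v hu hv; rewrite lt_max => /orP [/hu|/hv].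
- by move=> j Pj h; exists j.
Qed.
Local Close Scope ereal_scope.

Definition mg {d K n} (W : 'M[R]_(d, K)) (H : 'M[R]_(d, K * n)) (k : 'I_K) (i : 'I_n) (k' : 'I_K) : R :=
  \sum_(l < d) (W l k' - W l k) * hcol R d K n H k i l 0.

Lemma z_diff d K n (W : 'M[R]_(d, K)) (H : 'M[R]_(d, K * n)) k i j :
  (W^T *m hcol R d K n H k i) j 0 - (W^T *m hcol R d K n H k i) k 0 = mg W H k i j.
Proof.
rewrite !mxE -sumrB; apply: eq_bigr => l _; by rewrite !mxE mulrBl.
Qed.

Lemma CE_eq K (z : 'cV[R]_K) k tau :
  CE R K z k tau = ln (\sum_j expR ((z j 0 - z k 0) / tau)).
Proof.
rewrite /CE.
have S0 : 0 < \sum_(j < K) expR (z j 0 / tau).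
  by rewrite (bigD1 k) //= ltr_pwDl ?expR_gt0 // sumr_ge0 // => j _; exact: expR_ge0.
rewrite -lnV ?posrE ?divr_gt0 ?expR_gt0 //.
rewrite invf_div -expRN mulr_suml; congr ln; apply: eq_bigr => j _.
by rewrite -expRD mulrBl.
Qed.

Lemma sum_ge1 K (z : 'cV[R]_K) k tau :
  1 <= \sum_j expR ((z j 0 - z k 0) / tau).
Proof.
rewrite (bigD1 k) //= subrr mul0r expR0 lerDl sumr_ge0 // => j _; exact: expR_ge0.
Qed.

Lemma CE_ge0 K (z : 'cV[R]_K) k tau : 0 <= CE R K z k tau.
Proof. by rewrite CE_eq ln_ge0 // sum_ge1. Qed.

Lemma CE_lb d K n (W : 'M[R]_(d, K)) (H : 'M[R]_(d, K * n)) k i k' tau :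
  k' != k ->
  ln (1 + expR (mg W H k i k' / tau)) <= CE R K (W^T *m hcol R d K n H k i) k tau.
Proof.
move=> kk.
rewrite CE_eq ler_ln ?posrE; last first.
- apply: (lt_le_trans ltr01); exact: sum_ge1.
- by have := expR_gt0 (mg W H k i k' / tau); lra.
rewrite (bigD1 k) //= subrr mul0r expR0 lerD2l (bigD1 k') //= z_diff lerDl.
by rewrite sumr_ge0 // => j _; exact: expR_ge0.
Qed.

Lemma sum_cst_ord m (x : R) : \sum_(i < m) x = x *+ m.
Proof. by rewrite big_const_ord; elim: m => //= m ->; rewrite mulrS. Qed.

Lemma CE_ub d K n (W : 'M[R]_(d, K)) (H : 'M[R]_(d, K * n)) k i tau c :
  (forall j, j != k -> mg W H k i j <= c) -> 0 < tau ->
  CE R K (W^T *m hcol R d K n H k i) k tau <= ln (1 + K%:R * expR (c / tau)).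
Proof.
move=> hc t0.
rewrite CE_eq ler_ln ?posrE; first last.
- by have := expR_gt0 (c / tau); have : 0 <= K%:R :> R by []; nra.
- apply: (lt_le_trans ltr01); exact: sum_ge1.
rewrite (bigD1 k) //= subrr mul0r expR0 lerD2l.
apply: (@le_trans _ _ (\sum_(j < K | j != k) expR (c / tau))).
  apply: ler_sum => j jk; rewrite z_diff ler_expR ler_pM2r ?invr_gt0 //; exact: hc.
rewrite [leRHS](_ : _ = \sum_(j < K) expR (c / tau)); last first.
  by rewrite sum_cst_ord mulr_natl.
rewrite [leRHS](bigD1 k) //= lerDr; exact: expR_ge0.
Qed.

Lemma Ftau_lb d K n tau (W : 'M[R]_(d, K)) (H : 'M[R]_(d, K * n)) k i :
  (n * K)%:R^-1 * CE R K (W^T *m hcol R d K n H k i) k tau <= Ftau R d K n tau W H.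
Proof.
rewrite /Ftau ler_wpM2l ?invr_ge0 //.
rewrite (bigD1 k) //= (bigD1 i) //= -addrA lerDl.
rewrite addr_ge0 // !sumr_ge0 // => *; try apply: sumr_ge0 => *; exact: CE_ge0.
Qed.

Lemma Ftau_ub d K n tau (W : 'M[R]_(d, K)) (H : 'M[R]_(d, K * n)) c :
  (0 < n)%N -> (0 < K)%N -> 0 < tau ->
  (forall k i j, j != k -> mg W H k i j <= c) ->
  Ftau R d K n tau W H <= ln (1 + K%:R * expR (c / tau)).
Proof.
move=> n0 K0 t0 hc.
rewrite /Ftau.
apply: (@le_trans _ _ ((n * K)%:R^-1 * \sum_(k < K) \sum_(i < n) ln (1 + K%:R * expR (c / tau)))).
  rewrite ler_wpM2l ?invr_ge0 //; apply: ler_sum => k _; apply: ler_sum => i _.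
  by apply: CE_ub => // j jk; apply: hc.
rewrite sum_cst_ord sum_cst_ord -mulrnA.
set C := ln _.
rewrite -(mulr_natr C) mulrC mulfK //.
by rewrite pnatr_eq0 -lt0n muln_gt0 n0 K0.
Qed.

Lemma mg_cvg d K n (xs : nat -> 'M[R]_(d, K) * 'M[R]_(d, K * n)) (x : 'M[R]_(d, K) * 'M[R]_(d, K * n)) k i k' :
  xs @ \oo --> x -> (fun t => mg (xs t).1 (xs t).2 k i k') @ \oo --> mg x.1 x.2 k i k'.
Proof.
move=> xc; rewrite /mg; apply: cvg_sumR => l.
have -> : (fun t => ((xs t).1 l k' - (xs t).1 l k) * hcol R d K n (xs t).2 k i l 0) =
  (fun t => (xs t).1 l k' - (xs t).1 l k) \* (fun t => (xs t).2 l (mxvec_index k i)).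
  by apply: funext => t /=; rewrite /hcol mxE.
rewrite /hcol mxE; apply: cvgM; last exact: ent2.
by apply: cvgB; exact: ent1.
Qed.

Lemma OB_closed d m1 m2 (f : ('M[R]_(d, m1) * 'M[R]_(d, m2)) -> 'M[R]_(d, m1) * 'M[R]_(d, m2))
  (xs : nat -> 'M[R]_(d, m1) * 'M[R]_(d, m2)) (x : 'M[R]_(d, m1) * 'M[R]_(d, m2)) :
  xs @ \oo --> x -> (forall t, OB R d m1 (xs t).1 /\ OB R d m2 (xs t).2) ->
  OB R d m1 x.1 /\ OB R d m2 x.2.
Proof.
move=> xc hO; split => c.
- have h : (fun t => \sum_(l < d) (xs t).1 l c ^+ 2) @ \oo --> \sum_(l < d) x.1 l c ^+ 2.
    apply: cvg_sumR => l; under eq_fun do rewrite expr2.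
    rewrite expr2; apply: cvgM; exact: ent1.
  have e : (fun t => \sum_(l < d) (xs t).1 l c ^+ 2) = (fun=> 1).
    by apply: funext => t; case: (hO t) => + _; apply.
  rewrite e in h; exact: (cvg_unique _ h (cvg_cst (1 : R))).
- have h : (fun t => \sum_(l < d) (xs t).2 l c ^+ 2) @ \oo --> \sum_(l < d) x.2 l c ^+ 2.
    apply: cvg_sumR => l; under eq_fun do rewrite expr2.
    rewrite expr2; apply: cvgM; exact: ent2.
  have e : (fun t => \sum_(l < d) (xs t).2 l c ^+ 2) = (fun=> 1).
    by apply: funext => t; case: (hO t) => _; apply.
  rewrite e in h; exact: (cvg_unique _ h (cvg_cst (1 : R))).
Qed.

Definition e0mx {d} m (d0 : (0 < d)%N) : 'M[R]_(d, m) :=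
  \matrix_(l < d, j < m) (if (val l == 0)%N then 1 else 0).

Lemma e0mx_OB d m (d0 : (0 < d)%N) : OB R d m (e0mx m d0).
Proof.
move=> j; rewrite (bigD1 (Ordinal d0)) //= mxE /= expr1n big1 ?addr0 // => l hl.
rewrite mxE; case: ifP => [/eqP h|_]; last by rewrite expr0n.
by exfalso; move/eqP: hl; apply; apply: val_inj.
Qed.

Lemma e0mx_mg d K n (d0 : (0 < d)%N) (H : 'M[R]_(d, K * n)) k i j :
  mg (e0mx K d0) H k i j = 0.
Proof. by rewrite /mg big1 // => l _; rewrite !mxE subrr mul0r. Qed.

Lemma key d K n (x : 'M[R]_(d, K) * 'M[R]_(d, K * n)) (tau : nat -> R) xs z c k i k' :
  (0 < n)%N -> (0 < K)%N -> (forall j, 0 < tau j) -> tau @ \oo --> (0 : R) ->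
  (forall j, S_tau R d K n (tau j) (xs j)) -> xs @ \oo --> x ->
  OBpair R d K n z -> c <= 0 -> c < mg x.1 x.2 k i k' -> k' != k ->
  (forall k i j, j != k -> mg z.1 z.2 k i j <= c) -> False.
Proof.
move=> n0 K0 tp tc Sx xc Oz c0 cA kk hz.
apply: (@final (n * K)%:R K%:R c _ tau (fun t => mg (xs t).1 (xs t).2 k i k') _ _ c0 cA tp tc (mg_cvg _ _ _ _ _ k i k' xc)).
- by rewrite ltr0n muln_gt0 n0 K0.
- by rewrite ltr0n.
move=> j.
apply: le_trans (Ftau_ub _ _ _ (tau j) z.1 z.2 c n0 K0 (tp j) hz).
case: (Sx j) => _ /(_ z Oz) hF.
apply: le_trans hF.
apply: le_trans (Ftau_lb _ _ _ _ _ _ k i).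
rewrite ler_wpM2l ?invr_ge0 //; exact: CE_lb.
Qed.

End Helpers.
Arguments mg {R d K n}.
Arguments bmax_ltP {R I P F x}.
Arguments bmax_ge {R I P} F {i}.
Arguments e0mx {R d} m d0.

Theorem mainTheorem1 (R : realType) (d K n : nat) :
  (0 < d)%N -> (0 < n)%N -> (2 <= K)%N ->
  outer_limit_0 R _ (fun tau : R => S_tau R d K n tau)
    `<=` argmin_on_e R ('M[R]_(d, K) * 'M[R]_(d, K * n)) (OBpair R d K n) (fun p : 'M[R]_(d, K) * 'M[R]_(d, K * n) => HardMax R d K n p.1 p.2).
Proof.
move=> d0 n0 K2 x [tau [xs [tp [tc [Sx xc]]]]].
have K0 : (0 < K)%N by apply: leq_trans K2.
have Ox : OBpair R d K n x.
  have h := @OB_closed R d K (K * n) id xs x xc.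
  apply: h => t; by case: (Sx t) => [[a b] _].
split => // y Oy.
rewrite leNgt; apply/negP => hlt.
have [k [_ hk]] := bmax_ltP hlt.
have [i [_ hi]] := bmax_ltP hk.
have [k' [kk hA]] := bmax_ltP hi.
set A := mg x.1 x.2 k i k' in hA.
have terms : forall k i j, j != k -> ((mg y.1 y.2 k i j)%:E <= HardMax R d K n y.1 y.2)%E.
  move=> k1 i1 j1 jk.
  apply: le_trans (bmax_ge _ (erefl true)) => /=.
  apply: le_trans (bmax_ge _ (erefl true)) => /=.
  exact: (bmax_ge (fun j => (mg y.1 y.2 k1 i1 j)%:E) jk).
have [b [bA hb]] : exists b, b < A /\ (forall k i j, j != k -> mg y.1 y.2 k i j <= b).
  move: hA terms; case: (HardMax R d K n y.1 y.2) => [b| |] hA terms.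
  - exists b; split; first by rewrite -lte_fin.
    by move=> k1 i1 j1 jk; rewrite -lee_fin; exact: terms.
  - by exfalso; move: hA; rewrite ltNge leey.
  - exists (A - 1); split; first lra.
    by move=> k1 i1 j1 jk; have := terms k1 i1 j1 jk; rewrite leeNy_eq.
have [b0|b0] := lerP b 0.
  exact: (@key R d K n x tau xs y b k i k' n0 K0 tp tc Sx xc Oy b0 bA kk hb).
apply: (@key R d K n x tau xs (e0mx K d0, e0mx (K * n) d0) 0 k i k' n0 K0 tp tc Sx xc) => //.
- by split; apply: e0mx_OB.
- exact: lt_trans b0 bA.
- by move=> k1 i1 j1 _ /=; rewrite e0mx_mg.
Qed.
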